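(* If $\alpha$ is a half-space quasiorder on a set $A$, then there exist linear orders $R_1,R_2$ on $A/(\alpha\cap\alpha^{-1})$ with $r_\alpha=R_1\cap R_2$; in particular the partial order $r_\alpha$ has order dimension at most $2$.
   Context: A quasiorder on $A$ is a reflexive and transitive relation; $\Delta_A=\{(a,a)\mid a\in A\}$. A quasiorder $\alpha$ on $A$ is a half-space if there is a quasiorder $\beta$ on $A$ with $\alpha\cup\beta=A\times A$ and $\alpha\cap\beta=\Delta_A$. For a quasiorder $\gamma$, $r_\gamma$ is the induced partial order on $A/(\gamma\cap\gamma^{-1})$: $([a],[b])\in r_\gamma$ iff $(a,b)\in\gamma$. The order dimension of a partial order is the least cardinality of a set of linear extensions of it whose intersection is the partial order. *)

(* Defs.v *)
From Stdlib Require Import List.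
Import ListNotations.

Definition relation (X : Type) := X -> X -> Prop.

Definition reflexive {X} (r : relation X) := forall x, r x x.
Definition transitive {X} (r : relation X) := forall x y z, r x y -> r y z -> r x z.
Definition antisymmetric {X} (r : relation X) := forall x y, r x y -> r y x -> x = y.
Definition total {X} (r : relation X) := forall x y, r x y \/ r y x.

Definition quasiorder {X} (r : relation X) := reflexive r /\ transitive r.
Definition partial_order {X} (r : relation X) := quasiorder r /\ antisymmetric r.
Definition linear_order {X} (r : relation X) := partial_order r /\ total r.

Definition half_space {A} (alpha : relation A) :=
  quasiorder alpha /\
  exists beta : relation A, quasiorder beta /\
    (forall a b, alpha a b \/ beta a b) /\
    (forall a b, (alpha a b /\ beta a b) <-> a = b).

Definition kerrel {A} (gamma : relation A) : relation A :=
  fun a b => gamma a b /\ gamma b a.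

(* the quotient A/(gamma ∩ gamma^{-1}), as the type of equivalence classes *)
Definition eqclass {A} (gamma : relation A) (S : A -> Prop) :=
  exists a, forall b, S b <-> kerrel gamma a b.

Definition quot {A} (gamma : relation A) := { S : A -> Prop | eqclass gamma S }.

Definition class_of {A} (gamma : relation A) (S : quot gamma) : A -> Prop :=
  proj1_sig S.

Definition r_ {A} (gamma : relation A) : relation (quot gamma) :=
  fun X Y => exists a b, class_of gamma X a /\ class_of gamma Y b /\ gamma a b.

Definition linear_extension {X} (r R : relation X) :=
  linear_order R /\ (forall x y, r x y -> R x y).

Definition order_dim_le {X} (r : relation X) (n : nat) :=
  exists Rs : list (relation X), length Rs <= n /\
    (forall R, In R Rs -> linear_extension r R) /\
    (forall x y, r x y <-> (forall R, In R Rs -> R x y)).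

(* Main.v *)
From Pilot Require Import Defs.
From Stdlib Require Import List.
Import ListNotations.

From Stdlib Require Import Classical FunctionalExtensionality PropExtensionality ProofIrrelevance.

Section Abstract.
Variable Q : Type.
Variable r : Q -> Q -> Prop.
Hypothesis rrefl : forall x, r x x.
Hypothesis rtrans : forall x y z, r x y -> r y z -> r x z.
Hypothesis ranti : forall x y, r x y -> r y x -> x = y.
Definition Inc x y := ~ r x y /\ ~ r y x.
Hypothesis K : forall x y z, Inc x y -> Inc y z -> x = z \/ Inc x z.
Variable W : Q -> Q -> Prop.
Hypothesis Wtrans : forall x y z, W x y -> W y z -> W x z.
Hypothesis Wanti : forall x y, W x y -> W y x -> x = y.
Hypothesis Wtot : forall x y, W x y \/ W y x.

Definition Lx x y := r x y \/ (Inc x y /\ W x y).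

Lemma Lx_lin : linear_order Lx.
Proof.
  unfold Lx, Inc in *.
  split; [split; [split|] |].
  - intro x; left; apply rrefl.
  - intros x y z [H1|[I1 W1]] [H2|[I2 W2]].
    + left; eauto.
    + destruct (classic (r x z)) as [h|h]; [left; exact h|].
      destruct (classic (r z x)) as [h'|h'].
      * exfalso; apply (proj2 I2); eauto.
      * destruct (K x z y (conj h h') (conj (proj2 I2) (proj1 I2))) as [E|[I3 I4]].
        -- subst; right; auto.
        -- contradiction.
    + destruct (classic (r x z)) as [h|h]; [left; exact h|].
      destruct (classic (r z x)) as [h'|h'].
      * exfalso; apply (proj2 I1); eauto.
      * destruct (K y x z (conj (proj2 I1) (proj1 I1)) (conj h h')) as [E|[I3 I4]].
        -- subst; right; auto.
        -- contradiction.
    + destruct (K x y z I1 I2) as [E|I3].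
      * subst; left; apply rrefl.
      * right; split; eauto.
  - intros x y [H1|[I1 W1]] [H2|[I2 W2]].
    + auto.
    + destruct I2; contradiction.
    + destruct I1; contradiction.
    + auto.
  - intros x y.
    destruct (classic (r x y)) as [h|h]; [left; left; exact h|].
    destruct (classic (r y x)) as [h'|h']; [right; left; exact h'|].
    destruct (Wtot x y); [left|right]; right; repeat split; auto.
Qed.
End Abstract.

Lemma main_abstract (HW : forall T : Type, exists W : T -> T -> Prop,
  (forall x, W x x) /\ (forall x y z, W x y -> W y z -> W x z) /\
  (forall x y, W x y -> W y x -> x = y) /\ (forall x y, W x y \/ W y x))
 (Q : Type) (r : Q -> Q -> Prop) :
  partial_order r ->
  (forall x y z, Inc Q r x y -> Inc Q r y z -> x = z \/ Inc Q r x z) ->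
  (exists R1 R2 : relation Q,
      linear_order R1 /\ linear_order R2 /\
      (forall X Y, r X Y <-> (R1 X Y /\ R2 X Y)))
  /\ order_dim_le r 2.
Proof.
  intros [[rr rt] ra] K.
  destruct (HW Q) as [W [Wr [Wt [Wa Wl]]]].
  pose (W' := fun x y => W y x).
  assert (L1 := Lx_lin Q r rr rt ra K W Wt Wa Wl).
  assert (L2 := Lx_lin Q r rr rt ra K W' (fun x y z h1 h2 => Wt z y x h2 h1)
                  (fun x y h1 h2 => Wa x y h2 h1) (fun x y => Wl y x)).
  assert (E : forall X Y, r X Y <-> (Lx Q r W X Y /\ Lx Q r W' X Y)).
  { intros X Y; unfold Lx, W'; split.
    - intro h; split; left; exact h.
    - intros [[h|[I1 W1]] [h'|[I2 W2]]]; auto.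
      rewrite (Wa X Y W1 W2); apply rr. }
  split.
  - exists (Lx Q r W), (Lx Q r W'); auto.
  - exists [Lx Q r W; Lx Q r W']; split; [simpl; auto|split].
    + intros R [<-|[<-|[]]]; split; auto; intros x y h; apply E in h; tauto.
    + intros x y; rewrite E; split.
      * intros [h1 h2] R [<-|[<-|[]]]; auto.
      * intro h; split; apply h; simpl; auto.
Qed.

Section Quot.
Variable A : Type.
Variable alpha beta : relation A.
Hypothesis ar : forall a, alpha a a.
Hypothesis at_ : forall a b c, alpha a b -> alpha b c -> alpha a c.
Hypothesis bt : forall a b c, beta a b -> beta b c -> beta a c.
Hypothesis un : forall a b, alpha a b \/ beta a b.
Hypothesis it : forall a b, (alpha a b /\ beta a b) <-> a = b.

Lemma rep (X : quot alpha) : exists a, forall b, class_of alpha X b <-> kerrel alpha a b.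
Proof. destruct X as [S [a Ha]]; exists a; exact Ha. Qed.

Lemma r_rep (X Y : quot alpha) a b :
  (forall c, class_of alpha X c <-> kerrel alpha a c) ->
  (forall c, class_of alpha Y c <-> kerrel alpha b c) ->
  (r_ alpha X Y <-> alpha a b).
Proof.
  intros HX HY; split.
  - intros [a' [b' [h1 [h2 h3]]]].
    apply HX in h1; apply HY in h2; destruct h1, h2; eauto.
  - intro h; exists a, b; split; [apply HX|split; [apply HY|exact h]];
      split; apply ar.
Qed.

Lemma eq_rep (X Y : quot alpha) a b :
  (forall c, class_of alpha X c <-> kerrel alpha a c) ->
  (forall c, class_of alpha Y c <-> kerrel alpha b c) ->
  kerrel alpha a b -> X = Y.
Proof.
  destruct X as [S HS], Y as [S' HS']; simpl; intros HX HY [k1 k2].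
  assert (S = S').
  { apply functional_extensionality; intro c; apply propositional_extensionality.
    rewrite HX, HY; unfold kerrel; split; intros [h1 h2]; split; eauto. }
  subst; f_equal; apply proof_irrelevance.
Qed.

Lemma quot_po : partial_order (r_ alpha).
Proof.
  split; [split|].
  - intro X; destruct (rep X) as [a Ha]; apply (r_rep X X a a Ha Ha); apply ar.
  - intros X Y Z; destruct (rep X) as [a Ha], (rep Y) as [b Hb], (rep Z) as [c Hc].
    rewrite (r_rep X Y a b Ha Hb), (r_rep Y Z b c Hb Hc), (r_rep X Z a c Ha Hc); eauto.
  - intros X Y; destruct (rep X) as [a Ha], (rep Y) as [b Hb].
    rewrite (r_rep X Y a b Ha Hb), (r_rep Y X b a Hb Ha); intros h1 h2.
    apply (eq_rep X Y a b Ha Hb); split; auto.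
Qed.

Lemma quot_K : forall X Y Z, Inc _ (r_ alpha) X Y -> Inc _ (r_ alpha) Y Z ->
  X = Z \/ Inc _ (r_ alpha) X Z.
Proof.
  intros X Y Z; destruct (rep X) as [a Ha], (rep Y) as [b Hb], (rep Z) as [c Hc].
  unfold Inc.
  rewrite (r_rep X Y a b Ha Hb), (r_rep Y X b a Hb Ha), (r_rep Y Z b c Hb Hc),
    (r_rep Z Y c b Hc Hb), (r_rep X Z a c Ha Hc), (r_rep Z X c a Hc Ha).
  intros [n1 n2] [n3 n4].
  assert (bab : beta a b) by (destruct (un a b); tauto).
  assert (bba : beta b a) by (destruct (un b a); tauto).
  assert (bbc : beta b c) by (destruct (un b c); tauto).
  assert (bcb : beta c b) by (destruct (un c b); tauto).
  assert (bac : beta a c) by eauto.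
  assert (bca : beta c a) by eauto.
  destruct (classic (alpha a c)) as [h|h].
  - left; apply (eq_rep X Z a c Ha Hc).
    assert (a = c) by (apply it; auto). subst; split; apply ar.
  - destruct (classic (alpha c a)) as [h'|h'].
    + left; apply (eq_rep X Z a c Ha Hc).
      assert (c = a) by (apply it; auto). subst; split; apply ar.
    + right; auto.
Qed.
End Quot.

Module WO.
From mathcomp Require Import all_boot boolp wochoice.
Lemma exists_lin (T : Type) : exists W : T -> T -> Prop,
  (forall x, W x x) /\ (forall x y z, W x y -> W y z -> W x z) /\
  (forall x y, W x y -> W y x -> x = y) /\ (forall x y, W x y \/ W y x).
Proof.
have [R wR] := well_ordering_principle {classic T}.
have refl : forall x : {classic T}, R x x.
  move=> x; have [m [[mi l] _]] := wR (pred1 x) (ex_intro _ x (eqxx x)).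
  have Em : m = x by exact/eqP.
  by subst m; apply: l; exact: eqxx.
have anti : forall x y : {classic T}, R x y -> R y x -> x = y.
  move=> x y Rxy Ryx.
  have hx : x \in pred2 x y by rewrite !inE eqxx.
  have hy : y \in pred2 x y by rewrite !inE eqxx orbT.
  have [m [_ uniq]] := wR (pred2 x y) (ex_intro _ x hx).
  have mn : forall z, z \in pred2 x y -> minimum_of R (pred2 x y) z.
    move=> z zin; split => // w; rewrite !inE in zin * => /orP[]/eqP-> ;
      case/orP: zin => /eqP-> //.
  by rewrite -(uniq x (mn _ hx)) (uniq y (mn _ hy)).
have tot : forall x y : {classic T}, R x y \/ R y x.
  move=> x y.
  have hx : x \in pred2 x y by rewrite !inE eqxx.
  have [m [[mi lb] _]] := wR (pred2 x y) (ex_intro _ x hx).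
  rewrite !inE in mi; case/orP: mi => /eqP Em; subst m.
    by left; apply: lb; rewrite !inE eqxx orbT.
  by right; apply: lb; rewrite !inE eqxx.
exists (fun x y : {classic T} => R x y); split; first exact: refl.
split; last by split; [exact: anti| exact: tot].
move=> x y z Rxy Ryz.
have hx3 : (x : {classic T}) \in pred3 (x : {classic T}) y z by rewrite !inE eqxx.
have [m [[mi lb] _]] := wR (pred3 (x : {classic T}) y z) (ex_intro _ (x : {classic T}) hx3).
rewrite !inE in mi; case/or3P: mi => /eqP Em; subst m.
- by apply: lb; rewrite !inE eqxx !orbT.
- have Exy : x = y by apply: anti => //; apply: lb; rewrite !inE eqxx.
  by rewrite Exy.
- have Eyz : y = z by apply: anti => //; apply: lb; rewrite !inE eqxx !orbT.
  subst y; have Exz : x = z by apply: anti => //; apply: lb; rewrite !inE eqxx.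
  by rewrite Exz.
Qed.
End WO.
Import Pilot.Defs.

Theorem corollary2p6 (A : Type) (alpha : relation A) :
  half_space alpha ->
  (exists R1 R2 : relation (quot alpha),
      linear_order R1 /\ linear_order R2 /\
      (forall X Y, r_ alpha X Y <-> (R1 X Y /\ R2 X Y)))
  /\ order_dim_le (r_ alpha) 2.
Proof.
  intros [[ar at_] [beta [[br bt] [un it]]]].
  apply (main_abstract WO.exists_lin).
  - apply (quot_po A alpha ar at_).
  - apply (quot_K A alpha beta ar at_ bt un it).
Qed.
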